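(* Let $f(y\mid\vec x)$ be a conditional density of $Y\in\mathbb R$ given $\vec X=\vec x\in\mathcal X$ that is continuous in $y$ for every $\vec x$, and suppose the estimate used satisfies $\widehat f=f$. For $\vec x\in\mathcal X$ and $t\ge0$ define the profile $g_{\vec x}(t)=\int_{\{y: f(y\mid\vec x)\ge t\}} f(y\mid\vec x)\,dy$. Let $\vec x_{n+1}\in\mathcal X$ and let $(\vec X_1,Y_1),\ldots,(\vec X_m,Y_m)$ be the samples falling in the same partition element as $\vec x_{n+1}$, where, conditionally on the features $\vec x_1,\ldots,\vec x_m$, the responses $Y_i$ are independent with densities $f(\cdot\mid\vec x_i)$, and assume $g_{\vec x_i}=g_{\vec x_{n+1}}$ for all $i=1,\ldots,m$. Let $T_m=q\big(\alpha;\{f(Y_i\mid\vec x_i):i=1,\ldots,m\}\big)$. Then for every fixed $\alpha\in(0,1)$, $$T_m\xrightarrow[m\to\infty]{\text{a.s.}} t^*,$$ where $t^*=t^*(\vec x_{n+1},\alpha)$ is the cutoff of the oracle band for $f(\cdot\mid\vec x_{n+1})$, i.e. the value such that $\{y: f(y\mid\vec x_{n+1})\ge t^*\}$ is the smallest predictive region with coverage $1-\alpha$ (equivalently $g_{\vec x_{n+1}}(t^* )=1-\alpha$).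
   Context: For a finite set of reals $\{t_1,\ldots,t_m\}$, $q(\beta;\{t_1,\ldots,t_m\})$ denotes its empirical $\beta$ quantile. *)

(* Defs.v *)
From HB Require Import structures.
From mathcomp Require Import all_boot all_order all_algebra.
From mathcomp Require Import all_classical all_reals all_analysis.
Set Implicit Arguments. Unset Strict Implicit. Unset Printing Implicit Defensive.
Import Order.TTheory GRing.Theory Num.Theory.
Import numFieldNormedType.Exports.
Local Open Scope classical_set_scope.
Local Open Scope ring_scope.

(* Empirical beta-quantile of a finite multiset (given as a sequence) of reals:
   q(beta; s) = inf { t | #{ i : s_i <= t } >= beta * |s| },
   i.e. the ceil(beta*|s|)-th order statistic for 0 < beta <= 1, |s| >= 1. *)
Definition emp_quantile {R : realType} (beta : R) (s : seq R) : R :=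
  inf [set t : R | beta * (size s)%:R <= (count (fun x => x <= t) s)%:R].

Definition profile {R : realType} {X : Type} (f : X -> R -> R) (x : X) (t : R)
  : \bar R :=
  (\int[@lebesgue_measure R]_(y in [set y | (t <= f x y)%R]) (f x y)%:E)%E.

Definition cont_cond_density {R : realType} {X : Type} (f : X -> R -> R) : Prop :=
  forall x : X,
    [/\ (forall y, 0 <= f x y),
        measurable_fun setT (f x),
        (\int[@lebesgue_measure R]_y (f x y)%:E = 1)%E
      & continuous (f x)].

Definition has_density {d} {R : realType} {Omega : measurableType d}
  (P : probability Omega R) (Y : Omega -> R) (h : R -> R) : Prop :=
  measurable_fun setT Y /\
  forall B : set R, measurable B ->
    P (Y @^-1` B) = (\int[@lebesgue_measure R]_(y in B) (h y)%:E)%E.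

Definition mutually_independent {d} {R : realType} {Omega : measurableType d}
  (P : probability Omega R) (Y : nat -> Omega -> R) : Prop :=
  forall (s : seq nat) (B : nat -> set R), uniq s ->
    (forall i, measurable (B i)) ->
    P (\bigcap_(i in [set` s]) (Y i @^-1` B i)) =
    (\prod_(i <- s) P (Y i @^-1` B i))%E.

(* Main.v *)
Require Import Defs.
From HB Require Import structures.
From mathcomp Require Import all_boot all_order all_algebra.
From mathcomp Require Import all_classical all_reals all_analysis.
From mathcomp Require Import ring lra measurable_realfun.
Import Order.TTheory GRing.Theory Num.Theory.
Import numFieldNormedType.Exports.
Local Open Scope classical_set_scope.
Local Open Scope ring_scope.
Section slln.
Context (R : realType) d (Omega : measurableType d) (P : probability Omega R).

Definition ext {n} (b : {ffun 'I_n -> bool}) (i : nat) : bool :=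
  (fun o : option 'I_n => if o is Some j then b j else false) (insub i).

Lemma ext_ord n (b : {ffun 'I_n -> bool}) (j : 'I_n) : ext b j = b j.
Proof. by rewrite /ext valK. Qed.

Lemma subadd_seq (I : Type) (s : seq I) (Q : pred I) (F : I -> set Omega) :
  (forall i, measurable (F i)) ->
  (P (\big[setU/set0]_(i <- s | Q i) F i) <= \sum_(i <- s | Q i) P (F i))%E.
Proof.
move=> mF; elim: s => [|x s IH]; first by rewrite !big_nil measure0.
rewrite !big_cons; case: ifP => _ //.
apply: le_trans (measureU2 _ _ _) _ => //.
  by apply: bigsetU_measurable => i _.
by rewrite leeD2l.
Qed.

Lemma iota_index n : iota 0 n = index_iota 0 n.
Proof. by rewrite /index_iota subn0. Qed.

Variables (a : nat -> Omega -> bool) (p : R).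
Hypothesis p0 : 0 <= p.
Hypothesis p1 : p <= 1.
Hypothesis ma : forall i, measurable [set w | a i w].
Hypothesis Hind : forall (s : seq nat) (b : nat -> bool), uniq s ->
  P (\bigcap_(i in [set` s]) [set w | a i w == b i]) =
  (\prod_(i <- s) (if b i then p%:E else (1 - p)%:E))%E.

Definition cnt n w := count (fun i => a i w) (iota 0 n).
Definition Eb {n} (b : {ffun 'I_n -> bool}) :=
  \bigcap_(i in [set` iota 0 n]) [set w | a i w == ext b i].
Definition nb {n} (b : {ffun 'I_n -> bool}) := (\sum_(j < n) (b j : nat))%N.
Definition wt (be : bool) := if be then p else 1 - p.

Lemma mEb n b : measurable (@Eb n b).
Proof.
apply: bigcap_measurableType => i _.
have -> : [set w | a i w == ext b i] =
  if ext b i then [set w | a i w] else ~` [set w | a i w].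
  apply/seteqP; split => w /=.
    by case: (ext b i) => /eqP H; rewrite /setC /= H.
  by case: (ext b i) => /= H; apply/eqP; [exact: H|exact/negbTE/negP].
by case: (ext b i); [exact: ma|exact: (measurableC (ma i))].
Qed.

Lemma PEb n b : P (@Eb n b) = (\prod_(j < n) wt (b j))%:E.
Proof.
rewrite /Eb Hind ?iota_uniq // -prodEFin iota_index big_mkord.
by apply: eq_bigr => j _; rewrite ext_ord /wt; case: (b j).
Qed.

Lemma in_Eb n w : @Eb n [ffun j : 'I_n => a j w] w.
Proof.
move=> i /= /[!mem_iota] /andP[_ /= ilt]; rewrite /ext.
by case: insubP => [j _ /= <-|]; rewrite ?ffunE // ilt.
Qed.

Lemma nb_cnt n w : nb [ffun j : 'I_n => a j w] = cnt n w.
Proof.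
rewrite /cnt -sum1_count big_mkcond /= iota_index big_mkord.
by apply: eq_bigr => j _; rewrite ffunE; case: (a j w).
Qed.


Definition Fn (c : R) n := \big[setU/set0]_(b : {ffun 'I_n -> bool} |
   c * n%:R <= (nb b)%:R) Eb b.

Lemma mFn c n : measurable (Fn c n).
Proof. by apply: bigsetU_measurable => b _; exact: mEb. Qed.

Lemma prodwt_ge0 n (b : {ffun 'I_n -> bool}) : 0 <= \prod_(j < n) wt (b j).
Proof.
apply: prodr_ge0 => j _; rewrite /wt; case: (b j) => //.
by rewrite subr_ge0.
Qed.

Lemma PFn_le c n lam : 0 <= lam ->
  (P (Fn c n) <= (((p * expR lam + (1 - p)) / expR (lam * c)) ^+ n)%:E)%E.
Proof.
move=> lam0.
rewrite /Fn; apply: le_trans (@subadd_seq _ _ _ _ (fun b => @mEb n b)) _.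
under eq_bigr do rewrite PEb.
rewrite sumEFin lee_fin.
set K := expR (lam * c) ^+ n.
have K0 : 0 < K by rewrite exprn_gt0 // expR_gt0.
apply: (@le_trans _ _ (\sum_(b : {ffun 'I_n -> bool})
   (\prod_(j < n) wt (b j)) * (expR (lam * (nb b)%:R) / K))).
  rewrite [X in _ <= X](bigID (fun b : {ffun 'I_n -> bool} => c * n%:R <= (nb b)%:R)) /=.
  apply: ler_wpDr.
    apply: sumr_ge0 => b _; apply: mulr_ge0; first exact: prodwt_ge0.
    by apply: divr_ge0; [exact: expR_ge0|exact: ltW].
  apply: ler_sum => b cb; apply: ler_peMr.
    exact: prodwt_ge0.
  rewrite ler_pdivlMr // mul1r /K -expRM_natl ler_expR.
  nra.
under eq_bigr do rewrite mulrA.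
rewrite -mulr_suml.
have -> : \sum_(b : {ffun 'I_n -> bool}) (\prod_(j < n) wt (b j)) * expR (lam * (nb b)%:R)
   = \sum_(b : {ffun 'I_n -> bool}) \prod_(j < n) (wt (b j) * expR (lam * (b j : nat)%:R)).
  apply: eq_bigr => b _; rewrite big_split /=; congr (_ * _).
  by rewrite /nb natr_sum mulr_sumr expR_sum.
rewrite -(bigA_distr_bigA (fun (j : 'I_n) (be : bool) => wt be * expR (lam * (be : nat)%:R))) /=.
under eq_bigr do rewrite big_bool /=.
rewrite prodr_const card_ord /K expr_div_n /wt mulr0 expR0 mulr1 mulr1.
by [].
Qed.

Lemma geo_bound (q : R) : 0 < q < 1 ->
  (\sum_(n <oo) (q ^+ n)%:E <= ((1 - q)^-1)%:E)%E.
Proof.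
move=> /andP[q0 q1].
apply: lime_le.
  by apply: is_cvg_nneseries => n _ _; rewrite lee_fin exprn_ge0 // ltW.
apply: nearW => n; rewrite sumEFin lee_fin.
rewrite (_ : \sum_(0 <= k < n) q ^+ k = series (geometric 1 q) n); last first.
  by rewrite /series /=; apply: eq_bigr => k _; rewrite /geometric /= mul1r.
rewrite -[X in _ <= X]mul1r; apply: geometric_le_lim => //.
by rewrite ger0_norm ?ltW.
Qed.

Lemma slln_upper c : p < c ->
  {ae P, forall w, \forall n \near \oo, (cnt n w)%:R < c * n%:R}.
Proof.
move=> pc; have p0' := p0; have p1' := p1.
have c0 : 0 < c by lra.
set lam := (c - p) / (2 * c).
have lam0 : 0 < lam by apply: divr_gt0; lra.
have lamc : lam * c = (c - p) / 2.
  by rewrite /lam; field; rewrite gt_eqF.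
have lam1 : lam < 1.
  by rewrite /lam ltr_pdivrMr; lra.
set q := (p * expR lam + (1 - p)) / expR (lam * c).
have e1 : expR lam <= (1 - lam)^-1.
  have := expR_ge1Dx (- lam); rewrite expRN => h.
  rewrite -[X in X <= _]invrK lef_pV2 ?posrE ?invr_gt0 ?expR_gt0 //; lra.
have e2 : 1 + lam * c <= expR (lam * c) by apply: expR_ge1Dx.
have ge1 : 1 <= expR lam by have := expR_ge1Dx lam; lra.
have q0 : 0 < q.
  apply: divr_gt0; last exact: expR_gt0.
  nra.
have q1 : q < 1.
  rewrite /q ltr_pdivrMr ?expR_gt0 // mul1r.
  apply: le_lt_trans (_ : p * (1 - lam)^-1 + (1 - p) < _).
    by rewrite lerD2r ler_wpM2l.
  apply: lt_le_trans e2.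
  rewrite -ltrBrDr ltr_pdivrMr; last lra.
  rewrite lamc; nra.
have BC : P (lim_sup_set (Fn c)) = 0%E.
  apply: lim_sup_set_cvg0 => [k|]; first exact: mFn.

  have S1 : (\sum_(n <oo) P (Fn c n) <= \sum_(n <oo) (q ^+ n)%:E)%E.
    apply: lee_nneseries => [n _ _|n _]; first exact: measure_ge0.
    exact: PFn_le (ltW lam0).
  apply: (le_lt_trans S1).
  have q01 : 0 < q < 1 by apply/andP; split.
  by apply: (le_lt_trans (@geo_bound q q01)); exact: ltry.
exists (lim_sup_set (Fn c)); split => //.
  apply: bigcap_measurableType => k _; apply: bigcup_measurable => j _.
  exact: mFn.
move=> w /= Hn N _.
apply: contrapT => hN; apply: Hn; exists N => // n /= Nn.
rewrite ltNge; apply/negP => cn; apply: hN; exists n => //.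
rewrite /Fn -bigcup_seq_cond; exists [ffun j : 'I_n => a j w].
  by rewrite /= mem_index_enum nb_cnt.
exact: in_Eb.
Qed.

End slln.
Arguments cnt {d Omega} a n w.

Lemma slln_lower (R : realType) d (Omega : measurableType d) (P : probability Omega R)
  (a : nat -> Omega -> bool) (p : R) : 0 <= p -> p <= 1 ->
  (forall i, measurable [set w | a i w]) ->
  (forall (s : seq nat) (b : nat -> bool), uniq s ->
    P (\bigcap_(i in [set` s]) [set w | a i w == b i]) =
    (\prod_(i <- s) (if b i then p%:E else (1 - p)%:E))%E) ->
  forall c, c < p ->
  {ae P, forall w, \forall n \near \oo, c * n%:R < (cnt a n w)%:R}.
Proof.
move=> p0 p1 ma Hind c cp.
have q0 : 0 <= 1 - p by rewrite subr_ge0.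
have q1 : 1 - p <= 1 by rewrite lerBlDr lerDl.
have mq : forall i, measurable [set w | ~~ a i w].
  move=> i; have -> : [set w | ~~ a i w] = ~` [set w | a i w].
    by apply/seteqP; split => w /=; case: (a i w).
  exact: measurableC.
have Hq : forall (s : seq nat) (b : nat -> bool), uniq s ->
    P (\bigcap_(i in [set` s]) [set w | ~~ a i w == b i]) =
    (\prod_(i <- s) (if b i then (1 - p)%:E else (1 - (1 - p))%:E))%E.
  move=> s b us; have := Hind s (fun i => ~~ b i) us.
  have -> : \bigcap_(i in [set` s]) [set w | a i w == ~~ b i] =
            \bigcap_(i in [set` s]) [set w | ~~ a i w == b i].
    apply: eq_bigcapr => i _; apply/seteqP; split => w /=;
      by case: (a i w); case: (b i).
  move=> ->; apply: eq_bigr => i _.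
  by case: (b i) => //=; rewrite opprB addrC subrK.
have cq : 1 - p < 1 - c by lra.
have H := @slln_upper R d Omega P (fun i w => ~~ a i w) (1 - p) q0 q1 mq Hq (1 - c) cq.
apply: filterS H => w /=; apply: filterS => n /=.
have hn : n%:R = (count (fun i => a i w) (iota 0 n))%:R +
   (count (fun i => ~~ a i w) (iota 0 n))%:R :> R.
  by rewrite -natrD (count_predC (fun i => a i w)) size_iota.
rewrite /cnt hn; nra.
Qed.

Section fprops.
Context (R : realType) (h : R -> R).
Hypothesis h0 : forall y, 0 <= h y.
Hypothesis mh : measurable_fun setT h.
Hypothesis h1 : (\int[@lebesgue_measure R]_y (h y)%:E = 1)%E.
Hypothesis ch : continuous h.

Local Notation mu := (@lebesgue_measure R).
Definition G (t : R) := (\int[mu]_(y in [set y | (t <= h y)%R]) (h y)%:E)%E.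

Lemma mlev t : measurable [set y | t <= h y].
Proof.
have := mh measurableT _ (measurable_itv `[t, +oo[); rewrite setTI.
congr measurable; apply/seteqP; split => y /=; rewrite in_itv /= andbT //.
Qed.

Lemma mhE (D : set R) : measurable_fun D (EFin \o h).
Proof.
apply/measurable_EFinP; exact: measurable_funS mh.
Qed.

Lemma G_ge0 t : (0 <= G t)%E.
Proof. by apply: integral_ge0 => y _; rewrite lee_fin. Qed.

Lemma G_le1 t : (G t <= 1)%E.
Proof.
rewrite -h1; apply: ge0_subset_integral => //; first exact: mlev.
  exact: mhE.
by move=> y _; rewrite lee_fin.
Qed.

Lemma G_fin t : G t = (fine (G t))%:E.
Proof.
rewrite fineK // ge0_fin_numE ?G_ge0 //.
by apply: le_lt_trans (G_le1 t) _; exact: ltry.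
Qed.

Lemma G0 : G 0 = 1%E.
Proof.
rewrite -h1 /G; congr (integral _ _ _).
by apply/seteqP; split => y //= _; exact: h0.
Qed.

Lemma G_empty b : ~ (exists y, b <= h y) -> G b = 0%E.
Proof.
move=> nb; rewrite /G (_ : [set y | b <= h y] = set0) ?integral_set0 //.
by apply/seteqP; split => y //= hy; apply: nb; exists y.
Qed.

Lemma exists_small a : 0 < a -> exists z, h z < a.
Proof.
move=> a0; apply: contrapT => nz.
have hz : forall z, a <= h z.
  by move=> z; rewrite leNgt; apply/negP => hz; apply: nz; exists z.
have : (\int[mu]_(y in [set: R]) (cst a%:E) y <= \int[mu]_y (h y)%:E)%E.
  apply: ge0_le_integral => //.
  - by move=> y _; rewrite lee_fin ltW.
  - exact: mhE.
  - by move=> y _; rewrite lee_fin.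
rewrite h1 integral_cst // -set_itvNyy.
have := @lebesgue_measure_itv R `]-oo, +oo[; rewrite /= => ->.
by rewrite addey // gt0_muley ?lte_fin // leye_eq.
Qed.


Lemma exists_mid a b : a < b -> (exists y, b <= h y) -> (exists z, h z < a) ->
  exists c, h c = (a + b) / 2.
Proof.
move=> ab [y0 hy0] [z hz].
have hm1 : h z <= (a + b) / 2 by lra.
have hm2 : (a + b) / 2 <= h y0 by lra.
have [zy|yz] := leP z y0.
  have hv : Num.min (h z) (h y0) <= (a + b) / 2 <= Num.max (h z) (h y0).
    by rewrite ge_min hm1 le_max hm2 orbT.
  have [c _ hc] := @IVT R h z y0 ((a + b) / 2) zy (continuous_subspaceT ch) hv.
  by exists c.
have hv : Num.min (h y0) (h z) <= (a + b) / 2 <= Num.max (h y0) (h z).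
  by rewrite ge_min hm1 orbT le_max hm2.
have [c _ hc] := @IVT R h y0 z ((a + b) / 2) (ltW yz) (continuous_subspaceT ch) hv.
by exists c.
Qed.

Lemma G_strict a b : 0 < a -> a < b -> (exists y, b <= h y) -> (G b < G a)%E.
Proof.
move=> a0 ab ey.
have [c hc] := @exists_mid a b ab ey (@exists_small a a0).
have e0 : 0 < (b - a) / 2 by lra.
have := ch c; move/cvgr_dist_lt => /(_ _ e0).
move=> /nbhs_ballP [del /= del0 Hdel].
have Isub : ball c del `<=` [set y | a < h y < b].
  move=> y /Hdel /=; rewrite hc => hy.
  move: hy; rewrite ltr_distlC => /andP[l1 l2]; apply/andP; split; lra.
set I := ball c del.
have mI : measurable I by exact: measurable_ball.
have dj : [disjoint [set y | b <= h y] & I].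
  rewrite disj_set2E; apply/eqP/seteqP; split => // y [/= hb /Isub /andP[_ hy]].
  lra.
have sub : [set y | b <= h y] `|` I `<=` [set y | a <= h y].
  move=> y [/= hb|/Isub /andP[hy _]] /=; lra.
have step1 : (G b + \int[mu]_(y in I) (h y)%:E <= G a)%E.
  rewrite /G -ge0_integral_setU //; first last.
  - by move=> y _; rewrite lee_fin.
  - exact: mhE.
  - exact: mlev.
  apply: ge0_subset_integral => //.
  - by apply: measurableU => //; exact: mlev.
  - exact: mlev.
  - exact: mhE.
  - by move=> y _; rewrite lee_fin.
have step2 : (0 < \int[mu]_(y in I) (h y)%:E)%E.
  apply: (@lt_le_trans _ _ (\int[mu]_(y in I) (cst a%:E) y)%E).
    rewrite integral_cst //; have := @lebesgue_measure_ball R c del (ltW del0); rewrite /= => ->.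
    by rewrite -EFinM lte_fin mulr_gt0 // pmulrn_rgt0.
  apply: ge0_le_integral => //.
  - by move=> y _; rewrite lee_fin ltW.
  - exact: mhE.
  - by move=> y /Isub /andP[hy _]; rewrite lee_fin ltW.
apply: lt_le_trans step1.
by rewrite lteDl // G_fin.
Qed.

End fprops.
Arguments G {R} h t.

Lemma quantile_bounds (R : realType) (al lo s hi : R) (l : seq R) :
  lo < s ->
  (count (fun z => hi <= z) l)%:R < (1 - al) * (size l)%:R ->
  (1 - al) * (size l)%:R < (count (fun z => s <= z) l)%:R ->
  lo <= emp_quantile al l <= hi.
Proof.
move=> los Hhi Hs.
set S := [set t : R | al * (size l)%:R <= (count (fun x => x <= t) l)%:R].
have hiS : S hi.
  rewrite /S /=.
  have e1 := count_predC (fun x => x <= hi) l.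
  have e2 : (count (predC (fun x : R => (x <= hi)%R)) l <= count (fun z : R => (hi <= z)%R) l)%N.
    by apply: sub_count => z /=; rewrite -ltNge => /ltW.
  have e3 : (count (predC (fun x => x <= hi)) l)%:R <= (count (fun z => hi <= z) l)%:R :> R.
    by rewrite ler_nat.
  have e4 : (size l)%:R = (count (fun x => x <= hi) l)%:R +
     (count (predC (fun x => x <= hi)) l)%:R :> R by rewrite -natrD e1.
  clear S; lra.
have lbS : lbound S lo.
  move=> t /= St; rewrite leNgt; apply/negP => tlo.
  have e1 := count_predC (fun z => s <= z) l.
  have e2 : (count (fun x : R => (x <= t)%R) l <= count (predC (fun z : R => (s <= z)%R)) l)%N.
    apply: sub_count => z /= zt; rewrite -ltNge.
    by apply: le_lt_trans zt _; apply: lt_trans tlo los.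
  have e3 : (count (fun x => x <= t) l)%:R <= (count (predC (fun z => s <= z)) l)%:R :> R.
    by rewrite ler_nat.
  have e4 : (size l)%:R = (count (fun z => s <= z) l)%:R +
     (count (predC (fun z => s <= z)) l)%:R :> R by rewrite -natrD e1.
  rewrite /S /= in St; clear hiS S; lra.
apply/andP; split.
  by apply: lb_le_inf => //; exists hi.
by apply: ge_inf => //; exists lo.
Qed.

Lemma ae_forall_nat (R : realType) d (Omega : measurableType d)
  (P : probability Omega R) (Q : nat -> Omega -> Prop) :
  (forall k, {ae P, forall w, Q k w}) -> {ae P, forall w, forall k, Q k w}.
Proof.
move=> H.
have := negligible_bigcup H.
apply: negligibleS => w /= nQ.
apply: contrapT => nex; apply: nQ => k; apply: contrapT => nq.
by apply: nex; exists k.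
Qed.

Lemma Gprops {R : realType} {h : R -> R} :
  (forall y, 0 <= h y) -> measurable_fun setT h ->
  (\int[@lebesgue_measure R]_y (h y)%:E = 1)%E -> continuous h ->
  [/\ G h 0 = 1%E, (forall t, G h t = (fine (G h t))%:E),
      (forall t, 0 <= fine (G h t) <= 1),
      (forall a b, 0 < a -> a < b -> (exists y, b <= h y) -> (G h b < G h a)%E)
    & (forall b, ~ (exists y, b <= h y) -> G h b = 0%E)].
Proof.
move=> h0 mh h1 ch; split.
- exact: G0.
- by move=> t; exact: G_fin.
- move=> t; have ge : (0 <= G h t)%E by exact: G_ge0.
  have le : (G h t <= 1)%E by exact: G_le1.
  have e : G h t = (fine (G h t))%:E by exact: G_fin.
  by move: ge le; rewrite e !lee_fin => -> ->.
- by move=> a b a0 ab ey; exact: G_strict.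
- by move=> b; exact: G_empty.
Qed.

Theorem theorem4 (R : realType) (X : Type) (f : X -> R -> R)
  (d : measure_display) (Omega : measurableType d) (P : probability Omega R)
  (x0 : X) (x : nat -> X) (Y : nat -> Omega -> R) (alpha tstar : R) :
  cont_cond_density f ->
  mutually_independent P Y ->
  (forall i, has_density P (Y i) (f (x i))) ->
  (forall i t, 0 <= t -> profile f (x i) t = profile f x0 t) ->
  0 < alpha < 1 ->
  0 <= tstar ->
  profile f x0 tstar = (1 - alpha)%:E ->
  {ae P, forall w, (fun m : nat =>
      emp_quantile alpha [seq f (x i) (Y i w) | i <- iota 0 m]) @ \oo --> tstar}.
Proof.
move=> Hf Hind Hdens Hprof /andP[al0 al1] ts0 Hts.
have [h0 mh h1 ch] := Hf x0.
have [G0' Gfin G01 Gstr Gemp] := Gprops h0 mh h1 ch.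
have HtsG : G (f x0) tstar = (1 - alpha)%:E by [].
have tpos : 0 < tstar.
  rewrite lt_neqAle ts0 andbT; apply/eqP => t0.
  move: HtsG; rewrite -t0 G0' => /eqP; rewrite eqe; lra.
have mlevi : forall i s, measurable [set y | s <= f (x i) y].
  by move=> i s; have [? ? ? ?] := Hf (x i); exact: mlev.
have PA : forall s i, 0 <= s ->
    P [set w | s <= f (x i) (Y i w)] = (fine (G (f x0) s))%:E.
  move=> s i s0; have [_ HB] := Hdens i.
  have := HB _ (mlevi i s); rewrite /preimage /= => ->.
  by rewrite -Gfin; exact: (Hprof i s s0).
have mA : forall s i, measurable [set w | s <= f (x i) (Y i w)].
  move=> s i; have [mY _] := Hdens i.
  have := mY measurableT _ (mlevi i s); rewrite setTI.
  by rewrite /preimage /=.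
have Hindep : forall s, 0 <= s -> forall (sq : seq nat) (b : nat -> bool), uniq sq ->
    P (\bigcap_(i in [set` sq]) [set w | (s <= f (x i) (Y i w)) == b i]) =
    (\prod_(i <- sq) (if b i then (fine (G (f x0) s))%:E
                      else (1 - fine (G (f x0) s))%:E))%E.
  move=> s s0 sq b usq.
  have mB : forall i, measurable [set y | (s <= f (x i) y) == b i].
    move=> i; have -> : [set y | (s <= f (x i) y) == b i] =
      if b i then [set y | s <= f (x i) y] else ~` [set y | s <= f (x i) y].
      apply/seteqP; split => y /=.
        by case: (b i) => /eqP H; rewrite /setC /= H.
      by case: (b i) => /= H; apply/eqP; [exact: H|exact/negbTE/negP].
    by case: (b i); [exact: mlevi|exact: (measurableC (mlevi i s))].
  have := Hind sq (fun i => [set y | (s <= f (x i) y) == b i]) usq mB.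
  rewrite /preimage /= => ->; apply: eq_bigr => i _.
  have -> : [set w | (s <= f (x i) (Y i w)) == b i] =
      if b i then [set w | s <= f (x i) (Y i w)]
      else ~` [set w | s <= f (x i) (Y i w)].
    apply/seteqP; split => y /=.
      by case: (b i) => /eqP H; rewrite /setC /= H.
    by case: (b i) => /= H; apply/eqP; [exact: H|exact/negbTE/negP].
  case: (b i); first exact: PA.
  by rewrite probability_setC ?PA //; exact: mA.
have eyt : exists y, tstar <= f x0 y.
  apply: contrapT => ne; move: HtsG; rewrite Gemp // => /eqP; rewrite eqe; lra.
set T := fun w m => emp_quantile alpha [seq f (x i) (Y i w) | i <- iota 0 m].
have key : forall k, {ae P, forall w, \forall n \near \oo,
    `|tstar - T w n| <= tstar / (k.+2)%:R}.
  move=> k; set del := tstar / (k.+2)%:R.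
  have del0 : 0 < del by rewrite divr_gt0.
  have delle : del <= tstar / 2.
    rewrite /del ler_pdivrMr // mulrAC ler_pdivlMr // ler_pM2l //.
    by rewrite ler_nat.
  set sp := tstar + del; set sm := tstar - del / 2.
  have sm0 : 0 < sm by rewrite /sm; lra.
  have sp0 : 0 <= sp by rewrite /sp; lra.
  set pp := fine (G (f x0) sp); set pm := fine (G (f x0) sm).
  have pp_lt : pp < 1 - alpha.
    rewrite -lte_fin /pp -Gfin -HtsG.
    have [ey|ney] := pselect (exists y, sp <= f x0 y).
      by apply: Gstr => //; rewrite /sp; lra.
    by rewrite Gemp // HtsG lte_fin; lra.
  have pm_gt : 1 - alpha < pm.
    rewrite -lte_fin /pm -Gfin -HtsG.
    by apply: Gstr => //; rewrite /sm; lra.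
  have [pp0 pp1] : 0 <= pp /\ pp <= 1 by have /andP[] := G01 sp.
  have [pm0 pm1] : 0 <= pm /\ pm <= 1 by have /andP[] := G01 sm.
  have Up := @slln_upper R d Omega P (fun i w => sp <= f (x i) (Y i w)) pp pp0 pp1
    (mA sp) (Hindep sp sp0) (1 - alpha) pp_lt.
  have Lo := @slln_lower R d Omega P (fun i w => sm <= f (x i) (Y i w)) pm pm0 pm1
    (mA sm) (Hindep sm (ltW sm0)) (1 - alpha) pm_gt.
  apply: filterS2 Up Lo => w U L.
  apply: filterS2 U L => n /= U L.
  rewrite ler_distlC /T.
  apply: (@quantile_bounds R alpha (tstar - del) sm sp).
  - by rewrite /sm; lra.
  - by rewrite count_map size_map size_iota; exact: U.
  - by rewrite count_map size_map size_iota; exact: L.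
have := @ae_forall_nat R d Omega P _ key.
apply: filterS => w Hw; apply/cvgrPdist_le => eps eps0.
have tb := archi_boundP (divr_ge0 ts0 (ltW eps0)).
set k := Num.bound (tstar / eps) in tb.
apply: filterS (Hw k) => n /le_trans; apply.
rewrite ler_pdivrMr // -ler_pdivrMl //.
rewrite mulrC; apply: le_trans (ltW tb) _.
by rewrite ler_nat leqW // leqnSn.
Qed.
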